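(* Let $\mathbf P=(P,\leq,{}',0,1)$ be an orthogonal lub-complete poset. Then the following conditions are equivalent: (i) $\mathbf P$ is a paraorthomodular poset. (ii) For all $x,y\in P$, $x\rightarrow_K y=1$ implies $x\leq y$. (iii) For all $x,y\in P$, $x\rightarrow_N y=1$ implies $x\leq y$.
   Context: $(P,\leq,{}',0,1)$ is a bounded poset with an antitone involution ${}'$; orthogonal means $x\leq y'$ implies $x\vee y$ exists; lub-complete means for every lower bound $x$ of a finite subset $M$ there is a maximal lower bound of $M$ above $x$; paraorthomodular means $x\leq y$ and $x'\wedge y=0$ together imply $x=y$. For $A\subseteq P$, $L(A)$, $U(A)$ are the lower and upper cones, $\mathrm{Max}\,A$, $\mathrm{Min}\,A$ the sets of maximal and minimal elements; joins/meets with sets are elementwise. Kalmbach implication: $x\rightarrow_K y:=\mathrm{Max}\,L(x',y)\vee \mathrm{Max}\,L(x',y')\vee (x\wedge \mathrm{Min}\,U(x',y))$; non-tolens implication: $x\rightarrow_N y:=y'\rightarrow_K x'$. ''$=1$'' means equal to $\{1\}$. *)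

(* Defs.v *)
From Stdlib Require Import List.
Set Implicit Arguments.

Record BPosetInv (T : Type) := {
  le : T -> T -> Prop;
  cmp : T -> T;
  bot : T;
  top : T;
  le_refl : forall x, le x x;
  le_antisym : forall x y, le x y -> le y x -> x = y;
  le_trans : forall x y z, le x y -> le y z -> le x z;
  bot_le : forall x, le bot x;
  le_top : forall x, le x top;
  cmp_invol : forall x, cmp (cmp x) = x;
  cmp_antitone : forall x y, le x y -> le (cmp y) (cmp x)
}.

Section Defs.
Variables (T : Type) (P : BPosetInv T).
Local Notation "x <= y" := (le P x y).
Local Notation "x '^'' " := (cmp P x) (at level 2).

Definition tset := T -> Prop.

Definition is_join (x y z : T) : Prop :=
  x <= z /\ y <= z /\ forall w, x <= w -> y <= w -> z <= w.
Definition is_meet (x y z : T) : Prop :=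
  z <= x /\ z <= y /\ forall w, w <= x -> w <= y -> w <= z.

Definition Lc (x y : T) : tset := fun z => z <= x /\ z <= y.
Definition Uc (x y : T) : tset := fun z => x <= z /\ y <= z.

Definition Maxs (A : tset) : tset :=
  fun z => A z /\ forall w, A w -> z <= w -> w = z.
Definition Mins (A : tset) : tset :=
  fun z => A z /\ forall w, A w -> w <= z -> w = z.

Definition setJoin (A B : tset) : tset :=
  fun z => exists a b, A a /\ B b /\ is_join a b z.
Definition setMeet (A B : tset) : tset :=
  fun z => exists a b, A a /\ B b /\ is_meet a b z.
Definition single (x : T) : tset := fun z => z = x.

Definition implK (x y : T) : tset :=
  setJoin (setJoin (Maxs (Lc (x^') y)) (Maxs (Lc (x^') (y^'))))
          (setMeet (single x) (Mins (Uc (x^') y))).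
Definition implN (x y : T) : tset := implK (y^') (x^').

(* "S = 1" : S equals the singleton {1} *)
Definition is_one (S : tset) : Prop := forall z, S z <-> z = top P.

Definition orthogonal : Prop :=
  forall x y, x <= y^' -> exists z, is_join x y z.

Definition lowerb (M : list T) : tset := fun z => forall m, In m M -> z <= m.
Definition lub_complete : Prop :=
  forall (M : list T) x, lowerb M x ->
    exists z, Maxs (lowerb M) z /\ x <= z.

Definition paraorthomodular : Prop :=
  forall x y, x <= y -> is_meet (x^') y (bot P) -> x = y.
End Defs.

(* Main.v *)
Require Import Defs.
From Stdlib Require Import List.

Lemma cmp_swap T (P : BPosetInv T) x y : le P x (cmp P y) -> le P y (cmp P x).
Proof. intro H. apply cmp_antitone in H. rewrite cmp_invol in H. exact H. Qed.

Lemma cmp_swap' T (P : BPosetInv T) x y : le P (cmp P x) y -> le P (cmp P y) x.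
Proof. intro H. apply cmp_antitone in H. rewrite cmp_invol in H. exact H. Qed.

Lemma cmp_le T (P : BPosetInv T) x y : le P (cmp P x) (cmp P y) -> le P y x.
Proof. intro H. apply cmp_antitone in H. rewrite !cmp_invol in H. exact H. Qed.

Lemma cmp_top T (P : BPosetInv T) : cmp P (top P) = bot P.
Proof.
  apply (le_antisym P); [|apply bot_le].
  rewrite <- (cmp_invol P (bot P)) at 1. apply cmp_antitone. apply le_top.
Qed.

Lemma eq_top_bot T (P : BPosetInv T) z : cmp P z = top P -> z = bot P.
Proof. intro H. rewrite <- (cmp_invol P z), H. apply cmp_top. Qed.

Lemma join_unique T (P : BPosetInv T) a b z z' :
  is_join P a b z -> is_join P a b z' -> z = z'.
Proof.
  intros [H1 [H2 H3]] [H1' [H2' H3']]. apply (le_antisym P); auto.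
Qed.

Lemma meet_of_join T (P : BPosetInv T) a b j :
  is_join P (cmp P a) (cmp P b) j -> is_meet P a b (cmp P j).
Proof.
  intros [H1 [H2 H3]]. split; [|split].
  - apply cmp_swap'. exact H1.
  - apply cmp_swap'. exact H2.
  - intros w Hw1 Hw2. apply cmp_swap. apply H3; apply cmp_antitone; assumption.
Qed.

Lemma lowerb2 T (P : BPosetInv T) a b z : lowerb P (a :: b :: nil) z <-> Lc P a b z.
Proof.
  split.
  - intro H. split; apply H; simpl; auto.
  - intros [H1 H2] m Hm. simpl in Hm. destruct Hm as [<-|[<-|[]]]; auto.
Qed.

Lemma maxs_ex T (P : BPosetInv T) a b c : lub_complete P -> Lc P a b c ->
  exists t, Maxs P (Lc P a b) t /\ le P c t.
Proof.
  intros HL Hc. destruct (HL (a :: b :: nil) c) as [t [[Ht1 Ht2] Hct]].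
  - apply lowerb2. exact Hc.
  - exists t. split; [split|exact Hct].
    + apply lowerb2. exact Ht1.
    + intros w Hw Htw. apply Ht2; [apply lowerb2; exact Hw | exact Htw].
Qed.

Lemma orth_meet T (P : BPosetInv T) a b : orthogonal P -> le P (cmp P a) b ->
  exists q, is_meet P a b q.
Proof.
  intros HO H. destruct (HO (cmp P a) (cmp P b)) as [j Hj].
  - rewrite cmp_invol. exact H.
  - exists (cmp P j). apply meet_of_join. exact Hj.
Qed.

Lemma min_of_max T (P : BPosetInv T) a b t :
  Maxs P (Lc P (cmp P a) (cmp P b)) t -> Mins P (Uc P a b) (cmp P t).
Proof.
  intros [[H1 H2] H3]. split; [split|].
  - apply cmp_swap. exact H1.
  - apply cmp_swap. exact H2.
  - intros c [Hc1 Hc2] Hct.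
    assert (cmp P c = t).
    { apply H3. split; apply cmp_antitone; assumption.
      apply cmp_swap. exact Hct. }
    subst t. symmetry. apply cmp_invol.
Qed.

Lemma step1 T (P : BPosetInv T) x y u v w :
  orthogonal P -> paraorthomodular P -> is_one P (implK P x y) ->
  Maxs P (Lc P (cmp P x) y) u -> Maxs P (Lc P (cmp P x) (cmp P y)) v ->
  Mins P (Uc P (cmp P x) y) w ->
  (forall p, is_join P u v p -> p = cmp P x) /\ le P x w /\
  (forall c, le P (cmp P x) c -> le P x c -> c = top P).
Proof.
  intros HO HPO H1 Hu Hv Hw.
  destruct Hu as [[Hu1 Hu2] Hu3]. destruct Hv as [[Hv1 Hv2] Hv3].
  destruct Hw as [[Hw1 Hw2] Hw3].
  destruct (HO u v) as [p Hp].
  { apply (le_trans P) with y; auto. apply cmp_swap. exact Hv2. }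
  assert (Hpx : le P p (cmp P x)). { apply Hp; auto. }
  destruct (HO (cmp P x) (cmp P w)) as [j Hj].
  { rewrite cmp_invol. exact Hw1. }
  pose proof (meet_of_join _ P x w j Hj) as Hq.
  set (q := cmp P j) in *.
  destruct (HO p q) as [r Hr].
  { unfold q. rewrite cmp_invol. apply (le_trans P) with (cmp P x); auto. apply Hj. }
  assert (Hr1 : r = top P).
  { apply H1. exists p, q. split; [|split; [|exact Hr]].
    - exists u, v. split; [split; [split; assumption| exact Hu3] | split; [split; [split; assumption|exact Hv3] | exact Hp]].
    - exists x, w. split; [reflexivity | split; [split; [split; assumption | exact Hw3] | exact Hq]]. }
  assert (Hqx : le P q x) by apply Hq.
  assert (Hqp : q = cmp P p).
  { apply HPO.
    - apply (le_trans P) with x; auto. apply cmp_swap. exact Hpx.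
    - split; [apply bot_le|split; [apply bot_le|]].
      intros z Hz1 Hz2. apply cmp_swap in Hz1. apply cmp_swap in Hz2.
      assert (le P r (cmp P z)) by (apply Hr; auto).
      rewrite Hr1 in H. assert (cmp P z = top P) by (apply (le_antisym P); auto; apply le_top).
      rewrite (eq_top_bot _ P z H0). apply le_refl. }
  assert (Hxq : x = q).
  { apply (le_antisym P); auto. rewrite Hqp. apply cmp_swap. exact Hpx. }
  assert (Hpx' : p = cmp P x).
  { rewrite Hxq, Hqp, cmp_invol. reflexivity. }
  split; [|split].
  - intros p' Hp'. rewrite (join_unique _ P _ _ _ _ Hp' Hp). exact Hpx'.
  - rewrite Hxq. apply Hq.
  - intros c Hc1 Hc2. apply (le_antisym P); [apply le_top|].
    rewrite <- Hr1. apply Hr. rewrite Hpx'. exact Hc1. rewrite <- Hxq. exact Hc2.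
Qed.

Lemma i_ii T (P : BPosetInv T) x y :
  orthogonal P -> lub_complete P -> paraorthomodular P ->
  is_one P (implK P x y) -> le P x y.
Proof.
  intros HO HL HPO H1.
  destruct (maxs_ex _ P (cmp P x) y (bot P) HL) as [u [Hu _]].
  { split; apply bot_le. }
  destruct (maxs_ex _ P (cmp P x) (cmp P y) (bot P) HL) as [v [Hv _]].
  { split; apply bot_le. }
  assert (H2 : forall z, le P z x -> le P z (cmp P y) -> le P z (bot P)).
  { intros z Hz1 Hz2.
    destruct (maxs_ex _ P x (cmp P y) z HL) as [t [Ht Hzt]]. { split; auto. }
    assert (Ht' : Maxs P (Lc P (cmp P (cmp P x)) (cmp P y)) t) by (rewrite cmp_invol; exact Ht).
    pose proof (min_of_max _ P _ _ _ Ht') as Hw.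
    destruct (step1 _ P _ _ _ _ _ HO HPO H1 Hu Hv Hw) as [_ [Hxw Htop]].
    assert (cmp P t = top P).
    { apply Htop; auto. apply Hw. }
    rewrite (eq_top_bot _ P t H) in Hzt. exact Hzt. }
  destruct (maxs_ex _ P x (cmp P y) (bot P) HL) as [t0 [Ht0 _]]. { split; apply bot_le. }
  assert (Ht0' : Maxs P (Lc P (cmp P (cmp P x)) (cmp P y)) t0) by (rewrite cmp_invol; exact Ht0).
  pose proof (min_of_max _ P _ _ _ Ht0') as Hw0.
  destruct (step1 _ P _ _ _ _ _ HO HPO H1 Hu Hv Hw0) as [Hp _].
  destruct Hu as [[Hu1 Hu2] _]. destruct Hv as [[Hv1 Hv2] _].
  destruct (HO u v) as [p Hpj].
  { apply (le_trans P) with y; auto. apply cmp_swap. exact Hv2. }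
  pose proof (Hp p Hpj) as Hpx.
  assert (Hvy : v = cmp P y).
  { apply HPO; auto. split; [apply bot_le|split; [apply bot_le|]].
    intros z Hz1 Hz2. apply H2; auto.
    apply cmp_le. rewrite <- Hpx. apply Hpj.
    - apply (le_trans P) with y; auto. apply cmp_swap. exact Hz2.
    - apply cmp_swap. exact Hz1. }
  apply cmp_le. rewrite <- Hvy. exact Hv1.
Qed.

Lemma ii_i T (P : BPosetInv T) :
  lub_complete P ->
  (forall x y, is_one P (implK P x y) -> le P x y) -> paraorthomodular P.
Proof.
  intros HL H x y Hxy [_ [_ Hm]].
  apply (le_antisym P); auto. apply H.
  assert (Hyy : forall z, le P z (cmp P y) -> le P z y -> le P z (bot P)).
  { intros z Hz1 Hz2. apply Hm; auto. apply (le_trans P) with (cmp P y); auto.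
    apply cmp_antitone; auto. }
  assert (Hj : is_join P (cmp P y) y (top P)).
  { split; [apply le_top|split; [apply le_top|]].
    intros w Hw1 Hw2. apply cmp_le. rewrite cmp_top.
    apply Hyy; [apply cmp_antitone; auto|apply cmp_swap'; auto]. }
  assert (Hjy : forall m, le P m (cmp P y) -> is_join P m (cmp P y) (cmp P y)).
  { intros m Hm'. split; [auto|split; [apply le_refl|auto]]. }
  assert (Hmt : is_meet P y (top P) y).
  { split; [apply le_refl|split; [apply le_top|auto]]. }
  intro z. split.
  - intros [a [b [[m [n [Hmm [Hn Hmn]]]] [[c [d [Hc [Hd Hcd]]]] Hz]]]].
    unfold single in Hc. subst c.
    destruct Hn as [[Hn1 Hn2] Hn3].
    assert (n = cmp P y).
    { symmetry. apply Hn3. split; [apply le_refl|apply cmp_antitone; auto]. exact Hn1. }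
    subst n. destruct Hmm as [[Hm1 _] _].
    rewrite (join_unique _ P _ _ _ _ Hmn (Hjy m Hm1)) in Hz.
    destruct Hd as [[Hd1 Hd2] _].
    assert (d = top P).
    { apply (le_antisym P); [apply le_top|]. apply cmp_le. rewrite cmp_top.
      apply Hm. apply cmp_antitone. exact Hd2. apply cmp_swap'. exact Hd1. }
    subst d. assert (Hb : b = y).
    { destruct Hcd as [Ha1 [Ha2 Ha3]]. apply (le_antisym P); auto. apply Ha3; auto. apply le_refl. apply le_top. }
    subst b. exact (join_unique _ P _ _ _ _ Hz Hj).
  - intros ->.
    destruct (maxs_ex _ P (cmp P y) x (bot P) HL) as [m [Hmm _]]. { split; apply bot_le. }
    exists (cmp P y), y. split; [|split; [|exact Hj]].
    + exists m, (cmp P y). split; [exact Hmm|split; [|apply Hjy; apply Hmm]].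
      split; [split; [apply le_refl|apply cmp_antitone; auto]|].
      intros w [Hw1 _] Hw2. apply (le_antisym P); auto.
    + exists y, (top P). split; [reflexivity|split; [|exact Hmt]].
      split; [split; apply le_top|].
      intros w [Hw1 Hw2] _. apply (le_antisym P); [apply le_top|].
      apply cmp_le. rewrite cmp_top. apply Hm.
      apply cmp_antitone. exact Hw2. apply cmp_swap'. exact Hw1.
Qed.

Theorem theorem5 (T : Type) (P : BPosetInv T) :
  orthogonal P -> lub_complete P ->
  (paraorthomodular P <->
     (forall x y, is_one P (implK P x y) -> le P x y)) /\
  (paraorthomodular P <->
     (forall x y, is_one P (implN P x y) -> le P x y)).
Proof.
  intros HO HL.
  assert (E : paraorthomodular P <-> (forall x y, is_one P (implK P x y) -> le P x y)).
  { split.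
    - intros HPO x y. apply i_ii; auto.
    - apply ii_i; auto. }
  split; [exact E|].
  rewrite E. unfold implN. split.
  - intros H x y Hxy. apply cmp_le. apply H. exact Hxy.
  - intros H x y Hxy. apply cmp_le. apply H. rewrite !cmp_invol. exact Hxy.
Qed.
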